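(* Let $G$ be a strongly connected network on $\mathcal{V}$ with random-walk transition matrix $P=[p_{ij}]$, stationary distribution $\pi$, and edge cost matrix $W=[w_{ij}]$. Let $L=\Pi(I-P)$ with $\Pi=\mathrm{diag}(\pi)$ and $L^+$ its Moore–Penrose pseudo-inverse. Let $r_m=\sum_{k} p_{mk}w_{mk}$ and $g_m=r_m\pi_m$. Then for all $i,j\in\mathcal{V}$ the hitting cost and commute cost satisfy $$\mathbb{U}_{ij}=\sum_m (L^+_{im}-L^+_{jm}+L^+_{jj}-L^+_{ij})\,g_m,$$ $$\mathbb{C}_{ij}=(L^+_{ii}+L^+_{jj}-L^+_{ij}-L^+_{ji})\sum_m g_m.$$
   Context: A network is a weighted directed graph with nonnegative affinity matrix $A$, $P=D^{-1}A$, $D=\mathrm{diag}(\sum_j a_{ij})$; strongly connected means all nodes mutually reachable. Each edge $(x,y)$ carries cost $w_{xy}$. The hitting cost $\mathbb{U}_{ij}$ is the expected total cost $\sum w_{X_{k-1}X_k}$ of the edges traversed by the random walk started at $i$ up to the first time it hits $j$ (equal to $0$ if $i=j$). The commute cost is $\mathbb{C}_{ij}=\mathbb{U}_{ij}+\mathbb{U}_{ji}$. *)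

(* Defs.v *)
From HB Require Import structures.
From mathcomp Require Import all_boot all_order all_algebra.
From mathcomp Require Import all_classical all_reals all_analysis.
Set Implicit Arguments. Unset Strict Implicit. Unset Printing Implicit Defensive.
Import Order.TTheory GRing.Theory Num.Theory numFieldNormedType.Exports.
Local Open Scope ring_scope.

Section Network.
Variables (R : realType) (n : nat).

Definition degmx (A : 'M[R]_n) : 'M[R]_n := diag_mx (\row_i \sum_j A i j).

Definition transmx (A : 'M[R]_n) : 'M[R]_n := invmx (degmx A) *m A.

Definition edge_rel (A : 'M[R]_n) : rel 'I_n := fun x y => 0 < A x y.

Definition strongly_connected (A : 'M[R]_n) : Prop :=
  (forall i j, 0 <= A i j) /\ (forall i j : 'I_n, connect (edge_rel A) i j).

Definition stationary (P : 'M[R]_n) (pi : 'rV[R]_n) : Prop :=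
  (forall i, 0 <= pi 0 i) /\ \sum_i pi 0 i = 1 /\ pi *m P = pi.

Definition moore_penrose (M X : 'M[R]_n) : Prop :=
  [/\ M *m X *m M = M, X *m M *m X = X,
      (M *m X)^T = M *m X & (X *m M)^T = X *m M].

(* Contribution to the expected cost of the walk from i which first hits j
   after exactly k steps: sum over paths x_0 = i, x_1, ..., x_k = j with
   x_t <> j for t < k, of Prob(path) * (total cost of the path). *)
Definition hit_term (P W : 'M[R]_n) (i j : 'I_n) (k : nat) : R :=
  \sum_(x : {ffun 'I_k.+1 -> 'I_n} |
          [&& x ord0 == i, x ord_max == j &
              [forall t : 'I_k, x (widen_ord (leqnSn k) t) != j]])
    (\prod_(t < k) P (x (inord t)) (x (inord t.+1))) *
    (\sum_(t < k) W (x (inord t)) (x (inord t.+1))).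

Definition hitting_cost (P W : 'M[R]_n) (i j : 'I_n) : R :=
  if i == j then 0 else limn (series (hit_term P W i j) : R^nat).

Definition commute_cost (P W : 'M[R]_n) (i j : 'I_n) : R :=
  hitting_cost P W i j + hitting_cost P W j i.

End Network.

(* Main.v *)
Require Import Defs.
From HB Require Import structures.
From mathcomp Require Import all_boot all_order all_algebra.
From mathcomp Require Import all_classical all_reals all_analysis.
From mathcomp Require Import ring lra.
Import Order.TTheory GRing.Theory Num.Theory.
Import numFieldNormedType.Exports.
Local Open Scope ring_scope.
Set Implicit Arguments. Unset Strict Implicit. Unset Printing Implicit Defensive.


Section Paths.
Variables (R : realType) (n : nat) (P W : 'M[R]_n) (j : 'I_n).

Definition okp k (i : 'I_n) (x : {ffun 'I_k.+1 -> 'I_n}) : bool :=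
  [&& x ord0 == i, x ord_max == j &
              [forall t : 'I_k, x (widen_ord (leqnSn k) t) != j]].
Definition prp k (x : {ffun 'I_k.+1 -> 'I_n}) : R :=
  \prod_(t < k) P (x (inord t)) (x (inord t.+1)).
Definition csp k (x : {ffun 'I_k.+1 -> 'I_n}) : R :=
  \sum_(t < k) W (x (inord t)) (x (inord t.+1)).
Definition Fk k i : R := \sum_(x : {ffun 'I_k.+1 -> 'I_n} | okp i x) prp x.

Lemma HkE k i : hit_term P W i j k = \sum_(x : {ffun 'I_k.+1 -> 'I_n} | okp i x) prp x * csp x.
Proof. by []. Qed.

Definition fcons k (a : 'I_n) (y : {ffun 'I_k.+1 -> 'I_n}) : {ffun 'I_k.+2 -> 'I_n} :=
  [ffun t : 'I_k.+2 => if nat_of_ord t is m.+1 then y (inord m) else a].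
Definition ftail k (x : {ffun 'I_k.+2 -> 'I_n}) : {ffun 'I_k.+1 -> 'I_n} :=
  [ffun t : 'I_k.+1 => x (inord t.+1)].

Lemma sum_fcons k (F : {ffun 'I_k.+2 -> 'I_n} -> R) :
  \sum_x F x = \sum_a \sum_y F (fcons a y).
Proof.
rewrite pair_big /=.
rewrite (reindex (fun p : 'I_n * {ffun 'I_k.+1 -> 'I_n} => fcons p.1 p.2)) //=.
exists (fun x : {ffun 'I_k.+2 -> 'I_n} => (x ord0, ftail x)) => [[a y] _ | x _] /=.
  congr pair; first by rewrite ffunE.
  apply/ffunP => t; rewrite !ffunE.
  have -> : \val (inord t.+1 : 'I_k.+2) = t.+1 by apply: inordK; rewrite ltnS.
  by congr (y _); apply/val_inj; rewrite /= inordK.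
apply/ffunP => t; rewrite !ffunE.
case: t => [[|m] Hm] /=; first by congr (x _); apply/val_inj.
rewrite ffunE; congr (x _); apply/val_inj; rewrite /= !inordK //.
Qed.

Lemma fcons0 k a (y : {ffun 'I_k.+1 -> 'I_n}) : fcons a y ord0 = a.
Proof. by rewrite ffunE. Qed.

Lemma fconsI0 k a (y : {ffun 'I_k.+1 -> 'I_n}) : fcons a y (inord 0) = a.
Proof. by rewrite ffunE inordK. Qed.

Lemma fconsIS k a (y : {ffun 'I_k.+1 -> 'I_n}) m : (m < k.+1)%N ->
  fcons a y (inord m.+1) = y (inord m).
Proof. by move=> Hm; rewrite ffunE inordK. Qed.

Lemma fcons_max k a (y : {ffun 'I_k.+1 -> 'I_n}) : fcons a y ord_max = y ord_max.
Proof. by rewrite ffunE /=; congr (y _); apply/val_inj; rewrite /= inordK. Qed.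

Lemma prp_fcons k a (y : {ffun 'I_k.+1 -> 'I_n}) :
  prp (fcons a y) = P a (y ord0) * prp y.
Proof.
rewrite /prp big_ord_recl fconsI0 fconsIS // ; congr (P _ (y _) * _).
  by apply/val_inj; rewrite /= inordK.
by apply: eq_bigr => t _; rewrite lift0 fconsIS ?fconsIS // ltnS // ltnW.
Qed.

Lemma csp_fcons k a (y : {ffun 'I_k.+1 -> 'I_n}) :
  csp (fcons a y) = W a (y ord0) + csp y.
Proof.
rewrite /csp big_ord_recl fconsI0 fconsIS // ; congr (W _ (y _) + _).
  by apply/val_inj; rewrite /= inordK.
by apply: eq_bigr => t _; rewrite lift0 fconsIS ?fconsIS // ltnS // ltnW.
Qed.

Lemma okp_fcons k i a (y : {ffun 'I_k.+1 -> 'I_n}) :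
  okp i (fcons a y) = [&& a == i, a != j & okp (y ord0) y].
Proof.
rewrite /okp fcons0 fcons_max eqxx /=.
case: (a == i) => //=.
case: (y ord_max == j) => /=; last by rewrite !andbF.
apply/forallP/andP => [H|[Ha /forallP H] t].
  split; first by have := H ord0; rewrite ffunE.
  apply/forallP => t; have := H (lift ord0 t); rewrite ffunE /= .
  by congr (_ != _); congr (y _); apply/val_inj; rewrite /= add0n inordK // ltnS ltnW.
rewrite ffunE; case: t => [[|m] Hm] //=.
have Hm' : (m < k)%N by [].
have := H (Ordinal Hm'); congr (_ != _); congr (y _); apply/val_inj.
by rewrite /= inordK // ltnS ltnW.
Qed.

Lemma sum_pick (T : finType) (i : T) (Q : pred T) (f : T -> R) :
  \sum_a (if (a == i) && Q a then f a else 0) = if Q i then f i else 0.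
Proof. by rewrite (bigD1 i) //= eqxx /= big1 ?addr0 // => a /negPf ->. Qed.

Lemma okpE k b (y : {ffun 'I_k.+1 -> 'I_n}) : okp b y = (b == y ord0) && okp (y ord0) y.
Proof. by rewrite /okp eqxx /=; case: eqP => [->|/eqP]; rewrite ?eqxx // eq_sym => /negPf ->. Qed.

Lemma Fk0 i : Fk 0 i = (i == j)%:R.
Proof.
rewrite /Fk (reindex (fun a : 'I_n => [ffun _ : 'I_1 => a])) /=; last first.
  exists (fun x : {ffun 'I_1 -> 'I_n} => x ord0) => [a _|x _]; first by rewrite ffunE.
  by apply/ffunP => t; rewrite ffunE [t]ord1.
rewrite big_mkcond /=.
rewrite (eq_bigr (fun a => if (a == i) && (a == j) then 1 else 0)); last first.
  move=> a _; rewrite /okp !ffunE /prp big_ord0.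
  have -> : [forall t : 'I_0, [ffun=> a] (widen_ord (leqnSn 0) t) != j] by apply/forallP => -[].
  by rewrite andbT.
by rewrite (sum_pick i (fun a => a == j) (fun _ => 1)); case: (i == j).
Qed.

Lemma Hk0 i : hit_term P W i j 0 = 0.
Proof.
by rewrite HkE big1 // => x _; rewrite /csp big_ord0 mulr0.
Qed.

Lemma FkS k i : Fk k.+1 i = (i != j)%:R * \sum_b P i b * Fk k b.
Proof.
rewrite /Fk big_mkcond sum_fcons.
rewrite (eq_bigr (fun a => if (a == i) && (a != j) then
    \sum_(y : {ffun 'I_k.+1 -> 'I_n}) (if okp (y ord0) y then P a (y ord0) * prp y else 0) else 0)); last first.
  move=> a _; under eq_bigr => y _ do rewrite okp_fcons prp_fcons.
  by case: (a == i); case: (a != j) => //=; rewrite big1.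
rewrite (sum_pick i (fun a => a != j)); case: (i != j); rewrite ?mul0r ?mul1r //.
under [RHS]eq_bigr => b _ do rewrite big_distrr /=.
rewrite [RHS](exchange_big_dep xpredT) //=; apply: eq_bigr => y _.
rewrite [RHS]big_mkcond /=.
rewrite (eq_bigr (fun b => if (b == y ord0) && okp (y ord0) y then P i (y ord0) * prp y else 0)).
  by rewrite (sum_pick (y ord0) (fun _ => okp (y ord0) y) (fun _ => P i (y ord0) * prp y)).
by move=> b _; rewrite okpE; case: eqP => [->|] //=.
Qed.

Lemma HkS k i : hit_term P W i j k.+1 =
  (i != j)%:R * \sum_b P i b * (W i b * Fk k b + hit_term P W b j k).
Proof.
rewrite !HkE big_mkcond sum_fcons.
rewrite (eq_bigr (fun a => if (a == i) && (a != j) then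
    \sum_(y : {ffun 'I_k.+1 -> 'I_n}) (if okp (y ord0) y then
       P a (y ord0) * prp y * (W a (y ord0) + csp y) else 0) else 0)); last first.
  move=> a _; under eq_bigr => y _ do rewrite okp_fcons prp_fcons csp_fcons.
  by case: (a == i); case: (a != j) => //=; rewrite big1.
rewrite (sum_pick i (fun a => a != j)); case: (i != j); rewrite ?mul0r ?mul1r //.
under [RHS]eq_bigr => b _ do rewrite /Fk big_distrr mulrDr big_distrr /= big_distrr /= -big_split /=.
rewrite [RHS](exchange_big_dep xpredT) //=; apply: eq_bigr => y _.
rewrite [RHS]big_mkcond /=.
rewrite (eq_bigr (fun b => if (b == y ord0) && okp (y ord0) y then
       P i (y ord0) * prp y * (W i (y ord0) + csp y) else 0)).
  by rewrite (sum_pick (y ord0) (fun _ => okp (y ord0) y)).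
move=> b _; rewrite okpE; case: eqP => [->|] //=; case: (okp _ _) => //.
by rewrite -/(prp y) -/(csp y); ring.
Qed.

End Paths.

Section Part2.
Local Open Scope classical_set_scope.
Local Open Scope ring_scope.


Lemma exists_min (R : realType) n (f : 'I_n -> R) (i0 : 'I_n) : exists m, forall y, f m <= f y.
Proof.
case: (@arg_minP _ R _ i0 xpredT f isT) => m _ H; exists m => y; exact: H.
Qed.

Lemma cvg_fsum (R : realType) (I : finType) (u : I -> nat -> R) (l : I -> R) :
  (forall i, u i @ \oo --> l i) -> (fun N => \sum_i u i N) @ \oo --> \sum_i l i.
Proof.
move=> H; apply: cvg_big => //; first exact: add_continuous.
Qed.

Lemma lim_shift (R : realType) (u f : nat -> R) (l L : R) :
  u @ \oo --> l -> f @ \oo --> L -> (forall N, u N.+1 = f N) -> l = L.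
Proof.
move=> Hu Hf E.
have Hu' : (fun N => u N.+1) @ \oo --> l by rewrite (cvg_shiftS u).
have EE : f = (fun N => u N.+1) by apply: funext => N; rewrite E.
rewrite EE in Hf.
by rewrite -(cvg_lim (@Rhausdorff R) Hu'); apply: cvg_lim => //; exact: Rhausdorff.
Qed.

Lemma ps_nd (R : realType) (u : nat -> R) : (forall k, 0 <= u k) ->
  nondecreasing_seq (fun N => \sum_(0 <= k < N) u k).
Proof.
move=> H m p mp; rewrite (big_cat_nat (leq0n m) mp) /= lerDl.
by apply: sumr_ge0 => k _.
Qed.

Lemma ps_cvg (R : realType) (u : nat -> R) B : (forall k, 0 <= u k) ->
  (forall N, \sum_(0 <= k < N) u k <= B) -> cvgn (fun N => \sum_(0 <= k < N) u k).
Proof.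
move=> H HB; apply: nondecreasing_is_cvgn; first exact: ps_nd.
by exists B => _ [N _ <-].
Qed.

Section Analysis.
Variables (R : realType) (n : nat) (P W : 'M[R]_n) (j : 'I_n).
Hypotheses (Pge0 : forall a b, 0 <= P a b) (Psum : forall a, \sum_b P a b = 1).
Hypothesis harm0 : forall v : 'I_n -> R, v j = 0 ->
  (forall x, x != j -> v x = \sum_b P x b * v b) -> forall x, v x = 0.
Variable tau : 'I_n -> R.
Hypotheses (tauj : tau j = 0)
  (tauE : forall x, x != j -> tau x = 1 + \sum_b P x b * tau b).

Local Notation F := (Fk P j).
Local Notation H k i := (hit_term P W i j k).

Lemma tau_ge0 x : 0 <= tau x.
Proof.
have [m Hm] := exists_min tau j.
case: (m =P j) => [mj|/eqP mj]; first by rewrite -tauj -mj.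
exfalso.
have : 1 + tau m <= tau m.
  rewrite {2}tauE // lerD2l.
  rewrite -[X in X <= _]mul1r -(Psum m) big_distrl /=.
  by apply: ler_sum => b _; apply: ler_wpM2l.
lra.
Qed.

Lemma F_ge0 k i : 0 <= F k i.
Proof.
elim: k i => [|k IH] i; first by rewrite Fk0 ler0n.
rewrite FkS; apply: mulr_ge0; first exact: ler0n.
by apply: sumr_ge0 => b _; apply: mulr_ge0.
Qed.

Definition SF N i := \sum_(0 <= k < N) F k i.

Lemma SF_S N i : SF N.+1 i = (i == j)%:R + (i != j)%:R * \sum_b P i b * SF N b.
Proof.
rewrite /SF big_nat_recl // Fk0; congr (_ + _).
under eq_bigr => k _ do rewrite FkS.
rewrite -big_distrr /=; congr (_ * _).
rewrite exchange_big /=; apply: eq_bigr => b _.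
by rewrite big_distrr.
Qed.

Lemma SF_bnd N i : 0 <= SF N i <= 1.
Proof.
elim: N i => [|N IH] i; first by rewrite /SF big_geq // lexx ler01.
rewrite SF_S; case: (i =P j) => [_|_] /=; first by rewrite mul0r addr0 ler01 lexx.
rewrite mul1r add0r; apply/andP; split.
  by apply: sumr_ge0 => b _; apply: mulr_ge0 => //; case/andP: (IH b).
rewrite -(Psum i); apply: ler_sum => b _.
rewrite -[X in _ <= X]mulr1; apply: ler_wpM2l => //.
by case/andP: (IH b).
Qed.

Lemma SF_cvg i : cvgn (fun N => SF N i).
Proof.
apply: (@ps_cvg _ (fun k => F k i) 1); first by move=> k; apply: F_ge0.
by move=> N; case/andP: (SF_bnd N i).
Qed.

Definition Fs i := limn (fun N => SF N i).

Lemma SF_to i : (fun N => SF N i) @ \oo --> Fs i.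
Proof. exact: SF_cvg. Qed.

Lemma Fs_rec i : Fs i = (i == j)%:R + (i != j)%:R * \sum_b P i b * Fs b.
Proof.
have := (@lim_shift _ (fun N => SF N i)
   (fun N => (i == j)%:R + (i != j)%:R * \sum_b P i b * SF N b) _ ((i == j)%:R + (i != j)%:R * \sum_b P i b * Fs b) (@SF_to i)).
move=> HH; apply: HH; last by move=> N; rewrite SF_S.
apply: cvgD; first exact: cvg_cst.
apply: cvgMr; apply: cvg_fsum => b; apply: cvgMr; exact: SF_to.
Qed.


Lemma Fs1 i : Fs i = 1.
Proof.
suff : Fs i - 1 = 0 by move/eqP; rewrite subr_eq0 => /eqP.
apply: (harm0 (v := fun x => Fs x - 1)) => [|x xj].
  by rewrite Fs_rec eqxx /= mul0r addr0 subrr.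
rewrite Fs_rec (negPf xj) /= add0r mul1r.
under [RHS]eq_bigr => b _ do rewrite mulrBr mulr1.
by rewrite sumrB Psum.
Qed.

Definition SE N i := \sum_(0 <= k < N) k%:R * F k i.

Lemma SE_S N i : SE N.+1 i = (i != j)%:R * \sum_b P i b * (SE N b + SF N b).
Proof.
rewrite /SE big_nat_recl // mul0r add0r.
have -> : \sum_(0 <= k < N) (k.+1)%:R * F k.+1 i =
   \sum_(0 <= k < N) ((i != j)%:R * \sum_b P i b * ((k.+1)%:R * F k b)).
  apply: eq_bigr => k _; rewrite FkS mulrCA; congr (_ * _).
  by rewrite big_distrr; apply: eq_bigr => b _; rewrite mulrCA.
rewrite -big_distrr /=; congr (_ * _).
rewrite exchange_big /=; apply: eq_bigr => b _.
rewrite -big_distrr /=; congr (_ * _).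
rewrite /SF -big_split /=; apply: eq_bigr => k _.
by rewrite -natr1 mulrDl mul1r.
Qed.

Lemma SE_bnd N i : 0 <= SE N i <= tau i.
Proof.
elim: N i => [|N IH] i; first by rewrite /SE big_geq // lexx tau_ge0.
rewrite SE_S; case: (i =P j) => [_|/eqP ij] /=; first by rewrite mul0r lexx tau_ge0.
rewrite mul1r; apply/andP; split.
  apply: sumr_ge0 => b _; apply: mulr_ge0 => //; apply: addr_ge0.
    by case/andP: (IH b).
  by case/andP: (SF_bnd N b).
rewrite tauE // -{1}(Psum i) -big_split /=; apply: ler_sum => b _.
rewrite -[X in _ <= X + _]mulr1 -mulrDr addrC; apply: ler_wpM2l => //.
apply: lerD; last by case/andP: (IH b).
by case/andP: (SF_bnd N b).
Qed.

Definition cW := \sum_a \sum_b `|W a b|.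

Lemma cW_ge0 : 0 <= cW.
Proof. by apply: sumr_ge0 => a _; apply: sumr_ge0. Qed.

Lemma W_le a b : `|W a b| <= cW.
Proof.
rewrite /cW (bigD1 a) //= (bigD1 b) //= -addrA lerDl.
apply: addr_ge0; first by apply: sumr_ge0.
by apply: sumr_ge0 => ? _; apply: sumr_ge0.
Qed.

Lemma H_bnd k i : `|H k i| <= cW * (k%:R * F k i).
Proof.
elim: k i => [|k IH] i; first by rewrite Hk0 normr0 mul0r mulr0.
rewrite HkS FkS normrM normr_nat.
have -> : cW * ((k.+1)%:R * ((i != j)%:R * \sum_b P i b * F k b)) =
   (i != j)%:R * \sum_b P i b * (cW * ((k.+1)%:R * F k b)).
  have E : \sum_b P i b * (cW * ((k.+1)%:R * F k b)) = cW * ((k.+1)%:R * \sum_b P i b * F k b).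
    by rewrite !big_distrr; apply: eq_bigr => b _ /=; ring.
  by rewrite E; ring.
apply: ler_wpM2l; first exact: ler0n.
apply: (le_trans (ler_norm_sum _ _ _)); apply: ler_sum => b _.
rewrite normrM ger0_norm //; apply: ler_wpM2l => //.
apply: (le_trans (ler_normD _ _)).
have -> : cW * ((k.+1)%:R * F k b) = cW * F k b + cW * (k%:R * F k b).
  by rewrite -natr1; ring.
apply: lerD; last exact: IH.
by rewrite normrM (ger0_norm (F_ge0 k b)); apply: ler_wpM2r => //; [apply: F_ge0 | apply: W_le].
Qed.

Definition SH N i := \sum_(0 <= k < N) H k i.

Lemma SH_S N i : SH N.+1 i = (i != j)%:R * \sum_b P i b * (W i b * SF N b + SH N b).
Proof.
rewrite /SH big_nat_recl // Hk0 add0r.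
under eq_bigr => k _ do rewrite HkS.
rewrite -big_distrr /=; congr (_ * _).
rewrite exchange_big /=; apply: eq_bigr => b _.
rewrite -big_distrr /=; congr (_ * _).
by rewrite /SF big_distrr -big_split.
Qed.

Lemma SH_cvg i : cvgn (fun N => SH N i).
Proof.
have HZ : cvgn (fun N => \sum_(0 <= k < N) (H k i + cW * (k%:R * F k i))).
  apply: (@ps_cvg _ _ (2 * cW * tau i)).
    move=> k; have := H_bnd k i; rewrite ler_norml => /andP[h1 _].
    by rewrite -lerBlDr sub0r.
  move=> N; rewrite big_split /= -big_distrr /=.
  have h1 : \sum_(0 <= k < N) H k i <= cW * SE N i.
    rewrite /SE big_distrr /=; apply: ler_sum => k _.
    exact: le_trans (ler_norm _) (H_bnd k i).
  have h2 : cW * SE N i <= cW * tau i.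
    by apply: ler_wpM2l; [exact: cW_ge0 | case/andP: (SE_bnd N i)].
  rewrite -/(SE N i); lra.
have HE : cvgn (fun N => cW * SE N i).
  apply: is_cvgMr; apply: (@ps_cvg _ _ (tau i)).
    by move=> k; apply: mulr_ge0; [exact: ler0n | exact: F_ge0].
  by move=> N; case/andP: (SE_bnd N i).
have -> : (fun N => SH N i) = (fun N => \sum_(0 <= k < N) (H k i + cW * (k%:R * F k i)) - cW * SE N i).
  apply: funext => N; rewrite big_split /= -big_distrr /=.
  by rewrite /SE addrK.
exact: is_cvgB.
Qed.

Definition h0 i := limn (fun N => SH N i).

Lemma SH_to i : (fun N => SH N i) @ \oo --> h0 i.
Proof. exact: SH_cvg. Qed.

Lemma h0_rec i : h0 i = (i != j)%:R * \sum_b P i b * (W i b * Fs b + h0 b).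
Proof.
have := (@lim_shift _ (fun N => SH N i)
   (fun N => (i != j)%:R * \sum_b P i b * (W i b * SF N b + SH N b)) _
    ((i != j)%:R * \sum_b P i b * (W i b * Fs b + h0 b)) (@SH_to i)).
move=> HH; apply: HH; last by move=> N; rewrite SH_S.
apply: cvgMr; apply: cvg_fsum => b; apply: cvgMr; apply: cvgD; last exact: SH_to.
apply: cvgMr; exact: SF_to.
Qed.

Lemma hit_j : hitting_cost P W j j = 0.
Proof. by rewrite /hitting_cost eqxx. Qed.

Lemma hit_eq x : hitting_cost P W x j = h0 x.
Proof.
rewrite /hitting_cost; case: eqP => [->|_]; last by [].
by rewrite h0_rec eqxx mul0r.
Qed.

Lemma hit_rec x : x != j -> hitting_cost P W x j =
  \sum_b P x b * W x b + \sum_b P x b * hitting_cost P W b j.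
Proof.
move=> xj; rewrite !hit_eq h0_rec xj mul1r -big_split /=.
by apply: eq_bigr => b _; rewrite Fs1 mulr1 hit_eq mulrDr.
Qed.

End Analysis.

End Part2.


Lemma conn_closed (T : finType) (e : rel T) (C : pred T) :
  (forall a b, C a -> e a b -> C b) -> forall x y, connect e x y -> C x -> C y.
Proof.
move=> HC x y /connectP [p Hp ->]; elim: p x Hp => [|z p IH] x //= /andP [exz Hp] Cx.
exact: IH Hp (HC _ _ Cx exz).
Qed.

Section Net.
Variables (R : realType) (n : nat) (A : 'M[R]_n) (pi : 'rV[R]_n).
Hypothesis SC : strongly_connected A.
Hypothesis ST : stationary (transmx A) pi.

Let Pm := transmx A.
Let d i := \sum_k A i k.

Lemma Age0 a b : 0 <= A a b.
Proof. by case: SC. Qed.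

Lemma Acon a b : connect (edge_rel A) a b.
Proof. by case: SC. Qed.

Lemma d_gt0 i : 0 < d i.
Proof.
rewrite lt_def sumr_ge0 ?andbT; last by move=> k _; apply: Age0.
apply/negP => /eqP d0.
have Ai0 : forall k, A i k = 0.
  by move=> k; apply: (psumr_eq0P (fun k _ => Age0 i k) d0).
have alli : forall k, k = i.
  move=> k; have /connectP [p Hp ->] := Acon i k.
  case: p Hp => [|z p] //= /andP [Hz _].
  by move: Hz; rewrite /edge_rel Ai0 ltxx.
have A0 : A = 0.
  by apply/matrixP => a b; rewrite (alli a) (alli b) Ai0 mxE.
have P0 : Pm = 0 by rewrite /Pm /transmx A0 mulmx0.
case: ST => _ [s1 spi].
have pi0 : pi = 0 by rewrite -spi -/Pm P0 mulmx0.
by move: s1; rewrite pi0 big1 => [/eqP|k _]; rewrite ?mxE // eq_sym oner_eq0.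
Qed.

Lemma PE a b : Pm a b = A a b / d a.
Proof.
have Du : degmx A \in unitmx.
  rewrite unitmxE /degmx det_diag unitfE; apply: lt0r_neq0; apply: prodr_gt0 => i _.
  by rewrite mxE; apply: d_gt0.
have : degmx A *m Pm = A by rewrite /Pm /transmx mulmxA mulmxV // mul1mx.
rewrite /degmx mul_diag_mx => /matrixP /(_ a b); rewrite !mxE => <-.
by rewrite -/(d a) [d a * _]mulrC mulrK // unitfE; apply: lt0r_neq0; apply: d_gt0.
Qed.

Lemma Pge0 a b : 0 <= Pm a b.
Proof. by rewrite PE divr_ge0 // ?Age0 // ltW // d_gt0. Qed.

Lemma Psum a : \sum_b Pm a b = 1.
Proof.
under eq_bigr => b _ do rewrite PE.
by rewrite -mulr_suml divff // lt0r_neq0 // d_gt0.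
Qed.

Lemma Ppos a b : edge_rel A a b -> 0 < Pm a b.
Proof. by rewrite /edge_rel PE => H; rewrite divr_gt0 // d_gt0. Qed.

Lemma pst_stat b : pi 0 b = \sum_a pi 0 a * Pm a b.
Proof.
case: ST => _ [_ spi].
by rewrite -{1}spi mxE.
Qed.

Lemma pst_ge0 a : 0 <= pi 0 a.
Proof. by case: ST. Qed.

Lemma pst_gt0 k : 0 < pi 0 k.
Proof.
have [i Hi] : exists i, 0 < pi 0 i.
  case: (pickP (fun i => 0 < pi 0 i)) => [i Hi|H]; first by exists i.
  exfalso; case: ST => _ [s1 _].
  have : \sum_i pi 0 i <= 0.
    by apply: sumr_le0 => i _; move: (H i) => /negbT; rewrite -leNgt.
  rewrite s1; lra.
apply: (conn_closed (C := fun a => 0 < pi 0 a)) (Acon i k) Hi.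
move=> a b /= Ha Hab; rewrite pst_stat (bigD1 a) //=.
apply: (@lt_le_trans _ _ (pi 0 a * Pm a b)); first by apply: mulr_gt0 => //; apply: Ppos.
rewrite lerDl; apply: sumr_ge0 => c _; apply: mulr_ge0; [apply: pst_ge0 | apply: Pge0].
Qed.

Lemma harm_le (j : 'I_n) (v : 'I_n -> R) : v j = 0 ->
  (forall x, x != j -> v x = \sum_b Pm x b * v b) -> forall x, v x <= 0.
Proof.
move=> vj vh.
have [m Hm] := exists_min (fun x => - v x) j.
have Mmax : forall y, v y <= v m by move=> y; have := Hm y; rewrite lerN2.
suff : v m <= 0 by move=> H x; exact: le_trans (Mmax x) H.
rewrite leNgt; apply/negP => M0.
have : v j == v m.
  apply: (conn_closed (C := fun a => v a == v m)) (Acon m j) (eqxx _).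
  move=> a b /eqP va ab.
  have aj : a != j by apply/eqP => aj; move: M0; rewrite -va aj vj ltxx.
  have S0 : \sum_c Pm a c * (v m - v c) = 0.
    under eq_bigr => c _ do rewrite mulrBr.
    by rewrite sumrB -big_distrl /= Psum mul1r -vh // va subrr.
  have H : Pm a b * (v m - v b) = 0.
    have := @psumr_eq0P _ _ xpredT (fun c => Pm a c * (v m - v c)).
    move=> /(_ _ S0 b isT); apply.
    move=> c _; apply: mulr_ge0; [apply: Pge0 | rewrite subr_ge0; apply: Mmax].
  move/eqP: H; rewrite mulf_eq0 (negPf (lt0r_neq0 (Ppos ab))) /= subr_eq0.
  by rewrite eq_sym.
by rewrite vj => /eqP H; move: M0; rewrite -H ltxx.
Qed.

Lemma harm0 (j : 'I_n) (v : 'I_n -> R) : v j = 0 ->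
  (forall x, x != j -> v x = \sum_b Pm x b * v b) -> forall x, v x = 0.
Proof.
move=> vj vh x; apply/eqP; rewrite eq_le (harm_le vj vh) /=.
have := harm_le (v := fun x => - v x) (j := j); rewrite vj oppr0 => /(_ erefl).
move=> H; rewrite -oppr_le0; apply: H => y yj.
by rewrite vh // -sumrN; apply: eq_bigr => b _; rewrite mulrN.
Qed.

End Net.


Lemma sum_delta (R : realType) n (f : 'I_n -> R) b : \sum_i f i * (i == b)%:R = f b.
Proof. by rewrite (bigD1 b) //= eqxx mulr1 big1 ?addr0 // => i /negPf ->; rewrite mulr0. Qed.

Lemma sum_delta' (R : realType) n (f : 'I_n -> R) b : \sum_i f i * (b == i)%:R = f b.
Proof. by under eq_bigr => i _ do rewrite eq_sym; apply: sum_delta. Qed.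

Section Main.
Variables (R : realType) (n : nat) (A : 'M[R]_n) (pi : 'rV[R]_n) (Lp : 'M[R]_n).
Hypothesis SC : strongly_connected A.
Hypothesis ST : stationary (transmx A) pi.
Hypothesis MPH : moore_penrose (diag_mx pi *m (1%:M - transmx A)) Lp.

Let Pm := transmx A.
Let Lm := diag_mx pi *m (1%:M - Pm).

Lemma LmE x a : Lm x a = pi 0 x * ((x == a)%:R - Pm x a).
Proof. by rewrite /Lm mul_diag_mx !mxE. Qed.

Lemma nullT (y : 'I_n -> R) : (forall k, \sum_i Lm i k * y i = 0) -> forall a b, y a = y b.
Proof.
move=> Hy a b0.
have [m Hm] := exists_min (fun x => - y x) a.
have Mmax : forall z, y z <= y m by move=> z; have := Hm z; rewrite lerN2.
suff all : forall x, y x = y m by rewrite !all.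
move=> x; apply/eqP; apply: contraT => neq.
have : y m != y m.
  have CC := @conn_closed _ (edge_rel A) (fun c => y c != y m).
  apply: (CC _ x m (Acon SC x m) neq).
  move=> c b /= Hc cb; apply: contra Hc => /eqP Hb.
  have E : \sum_i pi 0 i * Pm i b * (y m - y i) = 0.
    have := Hy b.
    under eq_bigr => i _ do rewrite LmE mulrBr mulrBl.
    rewrite sumrB.
    under eq_bigr => i _ do rewrite mulrAC.
    rewrite sum_delta Hb => E1.
    under eq_bigr => i _ do rewrite mulrBr.
    rewrite sumrB -big_distrl /= -pst_stat //.
  have := @psumr_eq0P _ _ xpredT (fun i => pi 0 i * Pm i b * (y m - y i)).
  move=> /(_ _ E c isT) H; have {}H : pi 0 c * Pm c b * (y m - y c) = 0.
    apply: H => i _; apply: mulr_ge0; last by rewrite subr_ge0.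
    by apply: mulr_ge0; [exact: (pst_ge0 ST i) | exact: (Pge0 SC ST i b)].
  move/eqP: H; rewrite !mulf_eq0 (negPf (lt0r_neq0 (pst_gt0 SC ST c))).
  rewrite (negPf (lt0r_neq0 (Ppos SC ST cb))) /= subr_eq0 eq_sym => ->.
  done.
by rewrite eqxx.
Qed.

Lemma LLp_fix (v : 'I_n -> R) : \sum_a v a = 0 -> forall x, \sum_a (Lm *m Lp) x a * v a = v x.
Proof.
move=> v0 x; case: MPH => H1 _ H3 _.
pose N := 1%:M - Lm *m Lp.
have NL : N *m Lm = 0 by rewrite /N mulmxBl mul1mx H1 subrr.
have NE : forall a b, N a b = (a == b)%:R - (Lm *m Lp) a b by move=> a b; rewrite /N !mxE.
have H3' : forall a b, (Lm *m Lp) a b = (Lm *m Lp) b a.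
  by move=> a b; have := congr1 (fun M : 'M[R]_n => M a b) H3; rewrite {1}mxE => ->.
have Nsym : forall a b, N a b = N b a by move=> a b; rewrite !NE eq_sym H3'.
have col : forall a i b, N i a = N b a.
  move=> a; apply: nullT => k.
  have := congr1 (fun M : 'M[R]_n => M a k) NL; rewrite !mxE => H; rewrite -[RHS]H.
  by apply: eq_bigr => i _; rewrite Nsym mulrC.
have cst : forall i a, N i a = N x x.
  by move=> i a; rewrite (col a i x) Nsym (col x a x).
have -> : \sum_a (Lm *m Lp) x a * v a = \sum_a (v a * (x == a)%:R - N x x * v a).
  by apply: eq_bigr => a _; rewrite -(cst x a) NE eq_sym; ring.
by rewrite sumrB sum_delta' -big_distrr /= v0 mulr0 subr0.
Qed.

Lemma u_rec (j : 'I_n) (r : 'I_n -> R) x : x != j ->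
  \sum_m (Lp x m - Lp j m + Lp j j - Lp x j) * (r m * pi 0 m) =
  r x + \sum_a Pm x a * \sum_m (Lp a m - Lp j m + Lp j j - Lp a j) * (r m * pi 0 m).
Proof.
move=> xj.
pose g m := r m * pi 0 m.
pose G := \sum_m g m.
pose v m := g m - G * (m == j)%:R.
have v0 : \sum_m v m = 0.
  have D1 : \sum_(i < n) (i == j)%:R = 1 :> R.
    by rewrite -[RHS](sum_delta (fun _ => 1) j); apply: eq_bigr => i _; rewrite mul1r.
  by rewrite /v sumrB -big_distrr /= D1 mulr1 /G subrr.
pose al a := \sum_m Lp a m * v m.
pose be := Lp j j * G - \sum_m Lp j m * g m.
have uE : forall a, \sum_m (Lp a m - Lp j m + Lp j j - Lp a j) * (r m * pi 0 m) = al a + be.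
  move=> a.
  have E1 : \sum_m (Lp a m - Lp j m + Lp j j - Lp a j) * (r m * pi 0 m) =
     \sum_m Lp a m * g m - \sum_m Lp j m * g m + Lp j j * G - Lp a j * G.
    rewrite /G !big_distrr /= -!sumrB -big_split /= -sumrB.
    by apply: eq_bigr => m _; rewrite /g; ring.
  have E2 : \sum_m Lp a m * (g m - G * (m == j)%:R) = \sum_m Lp a m * g m - Lp a j * G.
    under eq_bigr => m _ do rewrite mulrBr [Lp a m * (G * _)]mulrCA.
    by rewrite sumrB -big_distrr /= (sum_delta (fun m => Lp a m)) mulrC.
  rewrite E1 /al /v E2 /be; ring.
have key : al x - \sum_a Pm x a * al a = r x.
  apply: (@mulfI _ (pi 0 x)); first exact: lt0r_neq0 (pst_gt0 SC ST x).
  have E3 : \sum_a Lm x a * al a = v x.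
    rewrite /al; under eq_bigr => a _ do rewrite big_distrr /=.
    rewrite exchange_big /= -(LLp_fix v0 x); apply: eq_bigr => m _.
    by rewrite mxE big_distrl /=; apply: eq_bigr => a _; rewrite mulrA.
  have E4 : \sum_a Lm x a * al a = pi 0 x * (al x - \sum_a Pm x a * al a).
    under eq_bigr => a _ do rewrite LmE -mulrA mulrBl.
    rewrite -big_distrr /= sumrB; congr (_ * (_ - _)).
      by under eq_bigr => a _ do rewrite mulrC; rewrite sum_delta'.
  by rewrite -E4 E3 /v (negPf xj) mulr0 subr0 /g mulrC.
rewrite uE; under eq_bigr => a _ do rewrite uE mulrDr.
rewrite big_split /= -big_distrl /= (Psum SC ST) mul1r.
rewrite -key; ring.
Qed.

End Main.

Unset Implicit Arguments. Set Strict Implicit. Set Printing Implicit Defensive.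

Theorem corollary3 (R : realType) (n : nat) (A W : 'M[R]_n) (pi : 'rV[R]_n)
  (Lp : 'M[R]_n) :
  strongly_connected A ->
  stationary (transmx A) pi ->
  moore_penrose (diag_mx pi *m (1%:M - transmx A)) Lp ->
  let P := transmx A in
  let g := fun m : 'I_n => (\sum_k P m k * W m k) * pi 0 m in
  forall i j : 'I_n,
    hitting_cost P W i j =
      \sum_m (Lp i m - Lp j m + Lp j j - Lp i j) * g m /\
    commute_cost P W i j =
      (Lp i i + Lp j j - Lp i j - Lp j i) * \sum_m g m.
Proof.
move=> SC ST MPH P g.
have HF : forall t x, hitting_cost P W x t =
    \sum_m (Lp x m - Lp t m + Lp t t - Lp x t) * g m.
  move=> t.
  pose tau x := \sum_m (Lp x m - Lp t m + Lp t t - Lp x t) * ((fun _ => 1) m * pi 0 m).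
  have tauj : tau t = 0.
    by rewrite /tau big1 // => m _; rewrite subrr add0r subrr mul0r.
  have tauE : forall x, x != t -> tau x = 1 + \sum_b P x b * tau b.
    by move=> x xt; rewrite /tau (u_rec SC ST MPH (fun _ => 1) xt).
  have hr := hit_rec W (Pge0 SC ST) (Psum SC ST) (harm0 SC ST (j := t)) tauj tauE.
  pose u x := \sum_m (Lp x m - Lp t m + Lp t t - Lp x t) * g m.
  have ut : u t = 0.
    by rewrite /u big1 // => m _; rewrite subrr add0r subrr mul0r.
  have D := harm0 SC ST (j := t) (v := fun x => hitting_cost P W x t - u x).
  move=> x; apply/eqP; rewrite -subr_eq0 -/(u x); apply/eqP; apply: D.
    by rewrite /hitting_cost eqxx ut subrr.
  move=> y yt; rewrite hr // /u (u_rec SC ST MPH (fun m => \sum_k P m k * W m k) yt).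
  rewrite -/(u _).
  under [in RHS]eq_bigr => b _ do rewrite mulrBr.
  rewrite sumrB; ring.
move=> i j; split; first exact: HF.
rewrite /commute_cost !HF -big_split big_distrr /=.
by apply: eq_bigr => m _; ring.
Qed.
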